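(* Let $(\mathfrak{A},\mathfrak{A}_0)$ be a CQ*-algebra as in the context, let $X\in\mathfrak{A}$, $\alpha\in\mathbb{C}$ and $\omega\in E(\mathfrak{A}_0)$. The following are equivalent: (i) $\overline{\omega}$ is an eigenstate of $X$ with eigenvalue $\alpha$, i.e. $\overline{\omega}(AX)=\alpha\,\overline{\omega}(A)$ for all $A\in\mathfrak{A}_0$; (ii) the unbounded vector $\pi_{\overline{\omega}}(X)\lambda_\omega(I)$ is bounded and $[\pi_{\overline{\omega}}(X)\lambda_\omega(I)]=\alpha\lambda_\omega(I)$.
   Context: Let $\mathfrak{A}_0$ be a unital C*-algebra with C*-norm $\|\cdot\|_0$ and unit $I$, and let $\|\cdot\|$ be another norm on $\mathfrak{A}_0$ with $\|A\|\le\|A\|_0$, $\|AB\|\le\|A\|\,\|B\|_0$, $\|A^*\|=\|A\|$. Let $\mathfrak{A}$ be the $\|\cdot\|$-completion of $\mathfrak{A}_0$; for $X\in\mathfrak{A}$, $A\in\mathfrak{A}_0$ and $A_n\to X$ in $\|\cdot\|$ ($A_n\in\mathfrak{A}_0$), $XA:=\lim A_nA$, $AX:=\lim AA_n$, $X^*:=\lim A_n^*$. $E(\mathfrak{A}_0)$ is the set of positive linear functionals $\omega$ on $\mathfrak{A}_0$ with $\omega(I)=1$ and $|\omega(A)|\le\gamma\|A\|$ for some $\gamma>0$ and all $A$; $\overline{\omega}$ is its continuous extension to $\mathfrak{A}$, $\overline{\omega}(X)=\lim\omega(A_n)$. $(\pi_\omega,\lambda_\omega,\mathcal{H}_\omega)$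 is the GNS construction of $\omega$ on $\mathfrak{A}_0$: $\lambda_\omega:\mathfrak{A}_0\to\mathcal{H}_\omega$ linear with dense range, $(\lambda_\omega(A)|\lambda_\omega(B))=\omega(B^*A)$. For $X\in\mathfrak{A}$, $\pi_{\overline{\omega}}(X)$ maps each $\lambda_\omega(B)$, $B\in\mathfrak{A}_0$, to the conjugate-linear functional (unbounded vector) on $\lambda_\omega(\mathfrak{A}_0)$ given by $\langle\pi_{\overline{\omega}}(X)\lambda_\omega(B),\lambda_\omega(C)\rangle=\overline{\omega}(C^*XB)=\lim_n(\pi_\omega(A_n)\lambda_\omega(B)|\lambda_\omega(C))$. A conjugate-linear functional $v$ on the dense subspace $\lambda_\omega(\mathfrak{A}_0)$ is called bounded if it extends continuously to $\mathcal{H}_\omega$; then $[v]$ denotes the unique vector of $\mathcal{H}_\omega$ with $\langle v,\eta\rangle=([v]|\eta)$ for all $\eta\in\lambda_\omega(\mathfrak{A}_0)$. *)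

(* Defs.v *)
From HB Require Import structures.
From mathcomp Require Import all_boot all_order all_algebra.
From mathcomp Require Import complex.
From mathcomp Require Import reals.
Set Implicit Arguments. Unset Strict Implicit. Unset Printing Implicit Defensive.
Import Order.TTheory GRing.Theory Num.Theory.
Local Open Scope ring_scope.

Section Defs.
Variable R : realType.
Local Notation C := R[i].

Definition cabs (z : C) : R := ComplexField.Normc.normc z.
Definition cconj (z : C) : C := conjc z.

Definition is_norm (V : lmodType C) (nv : V -> R) :=
  [/\ forall x, 0 <= nv x, forall x, nv x = 0 -> x = 0,
      forall (a : C) x, nv (a *: x) = cabs a * nv x
    & forall x y, nv (x + y) <= nv x + nv y].

Definition cvg_in (V : zmodType) (nv : V -> R) (u : nat -> V) (x : V) :=
  forall e : R, 0 < e -> exists N, forall k, (N <= k)%N -> nv (u k - x) < e.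

Definition cauchy_in (V : zmodType) (nv : V -> R) (u : nat -> V) :=
  forall e : R, 0 < e -> exists N, forall k l, (N <= k)%N -> (N <= l)%N ->
    nv (u k - u l) < e.

Definition complete_in (V : zmodType) (nv : V -> R) :=
  forall u, cauchy_in nv u -> exists x, cvg_in nv u x.

Definition cvgC (z : nat -> C) (w : C) :=
  forall e : R, 0 < e -> exists N, forall k, (N <= k)%N -> cabs (z k - w) < e.

Definition dense_range (T : Type) (V : zmodType) (nv : V -> R) (f : T -> V) :=
  forall x (e : R), 0 < e -> exists t, nv (f t - x) < e.

Definition is_Cstar_alg (A0 : algType C) (star : A0 -> A0) (n0 : A0 -> R) :=
  [/\ (forall x y, star (x + y) = star x + star y),
      (forall (a : C) x, star (a *: x) = cconj a *: star x),
      (forall x y, star (x * y) = star y * star x)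
    & (forall x, star (star x) = x)] /\
  [/\ is_norm n0,
      (forall x y, n0 (x * y) <= n0 x * n0 y),
      (forall x, n0 (star x * x) = n0 x ^+ 2)
    & complete_in n0].

Definition is_CQ_norm (A0 : algType C) (star : A0 -> A0) (n0 n : A0 -> R) :=
  [/\ is_norm n,
      (forall x, n x <= n0 x),
      (forall x y, n (x * y) <= n x * n0 y)
    & (forall x, n (star x) = n x)].

Definition is_completion (A0 : algType C) (n : A0 -> R)
    (A : lmodType C) (nA : A -> R) (j : A0 -> A) :=
  [/\ is_norm nA, complete_in nA,
      (forall x y, j (x + y) = j x + j y) /\
      (forall (a : C) x, j (a *: x) = a *: j x),
      (forall x, nA (j x) = n x)
    & dense_range nA j].

(* lmul A X = AX := lim_n A A_n  whenever A_n --> X *)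
Definition is_lmul (A0 : algType C) (A : lmodType C) (nA : A -> R)
    (j : A0 -> A) (lmul : A0 -> A -> A) :=
  forall (X : A) (u : nat -> A0) (a : A0),
    cvg_in nA (fun k => j (u k)) X -> cvg_in nA (fun k => j (a * u k)) (lmul a X).

Definition in_E (A0 : algType C) (star : A0 -> A0) (n : A0 -> R) (om : A0 -> C) :=
  [/\ (forall x y, om (x + y) = om x + om y),
      (forall (a : C) x, om (a *: x) = a * om x),
      (forall x, 0 <= om (star x * x)),
      om 1 = 1
    & exists gamma : R, 0 < gamma /\ forall x, cabs (om x) <= gamma * n x].

Definition is_ext (A0 : algType C) (A : lmodType C) (nA : A -> R)
    (j : A0 -> A) (om : A0 -> C) (ombar : A -> C) :=
  forall (X : A) (u : nat -> A0),
    cvg_in nA (fun k => j (u k)) X -> cvgC (fun k => om (u k)) (ombar X).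

Definition ip_norm (H : lmodType C) (ip : H -> H -> C) (x : H) : R :=
  Num.sqrt (complex.Re (ip x x)).

Definition is_Hilbert (H : lmodType C) (ip : H -> H -> C) :=
  [/\ (forall x y z, ip (x + y) z = ip x z + ip y z),
      (forall (a : C) x z, ip (a *: x) z = a * ip x z)
    & (forall x y, ip y x = cconj (ip x y))] /\
  [/\ (forall x, 0 <= ip x x),
      (forall x, ip x x = 0 -> x = 0)
    & complete_in (ip_norm ip)].

Definition is_GNS (A0 : algType C) (star : A0 -> A0) (om : A0 -> C)
    (H : lmodType C) (ip : H -> H -> C) (lam : A0 -> H) :=
  [/\ (forall x y, lam (x + y) = lam x + lam y),
      (forall (a : C) x, lam (a *: x) = a *: lam x),
      dense_range (ip_norm ip) lam
    & (forall x y, ip (lam x) (lam y) = om (star y * x))].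

(* A conjugate-linear functional on lambda(A0), given by its values
   v c = < v , lambda c >, is bounded if it extends continuously to H. *)
Definition bounded_uv (A0 : Type) (H : lmodType C) (ip : H -> H -> C)
    (lam : A0 -> H) (v : A0 -> C) :=
  exists f : H -> C,
    (forall x (e : R), 0 < e -> exists d : R, 0 < d /\
        forall y, ip_norm ip (y - x) < d -> cabs (f y - f x) < e)
    /\ forall c, f (lam c) = v c.

(* [v] = w : w is the (unique) vector with < v , eta > = (w | eta) on lambda(A0) *)
Definition bracket_is (A0 : Type) (H : lmodType C) (ip : H -> H -> C)
    (lam : A0 -> H) (v : A0 -> C) (w : H) :=
  forall c, v c = ip w (lam c).

(* < pi_ombar(X) lambda(B) , lambda(C) > = ombar (C^* X B); for B = I this is
   ombar(C^* X) *)
Definition pi_bar_I (A0 : algType C) (A : lmodType C) (star : A0 -> A0)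
    (lmul : A0 -> A -> A) (ombar : A -> C) (X : A) : A0 -> C :=
  fun c => ombar (lmul (star c) X).

End Defs.

(* Main.v *)
Require Import Defs.
From HB Require Import structures.
From mathcomp Require Import all_boot all_order all_algebra.
From mathcomp Require Import complex.
From mathcomp Require Import reals.
From mathcomp Require Import ring lra.
Import Order.TTheory GRing.Theory Num.Theory.
Local Open Scope ring_scope.

Section Helpers.
Variable R : realType.
Local Open Scope complex_scope.

Lemma cabs_ge0 (z : R[i]) : 0 <= cabs z.
Proof. by case: z => a b; rewrite /cabs /=; apply: sqrtr_ge0. Qed.

Lemma cabsM (x y : R[i]) : cabs (x * y) = cabs x * cabs y.
Proof. exact: ComplexField.Normc.normcM. Qed.

Lemma cabs0 : cabs (0 : R[i]) = 0.
Proof. exact: ComplexField.Normc.normc0. Qed.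

Variable H : lmodType R[i].
Variable ip : H -> H -> R[i].
Hypothesis HH : is_Hilbert ip.

Lemma ipD1 x y z : ip (x + y) z = ip x z + ip y z.
Proof. by case: HH => -[]. Qed.
Lemma ipZ1 a x z : ip (a *: x) z = a * ip x z.
Proof. by case: HH => -[]. Qed.
Lemma ipC x y : ip y x = conjc (ip x y).
Proof. by case: HH => -[]. Qed.
Lemma ip_ge0 x : 0 <= ip x x.
Proof. by case: HH => _ []. Qed.

Lemma ipD2 x y z : ip x (y + z) = ip x y + ip x z.
Proof. by rewrite ipC ipD1 rmorphD /= -!ipC. Qed.
Lemma ipZ2 a x y : ip x (a *: y) = conjc a * ip x y.
Proof. by rewrite ipC ipZ1 rmorphM /= -ipC. Qed.
Lemma ipN2 x y : ip x (- y) = - ip x y.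
Proof. by rewrite -scaleN1r ipZ2 rmorphN rmorph1 mulN1r. Qed.
Lemma ipB2 x y z : ip x (y - z) = ip x y - ip x z.
Proof. by rewrite ipD2 ipN2. Qed.

Lemma ip_expand u z b : ip (u + b *: z) (u + b *: z) =
  ip u u + conjc b * ip u z + b * conjc (ip u z) + b * conjc b * ip z z.
Proof.
rewrite !ipD1 !ipD2 !ipZ1 !ipZ2 [ip z u]ipC.
by rewrite mulrA; ring.
Qed.

Lemma ip_real x : exists2 N : R, ip x x = N +i* 0 & 0 <= N.
Proof.
have := ip_ge0 x; case: (ip x x) => a b; rewrite lecE /= => /andP[/eqP <- h].
by exists a.
Qed.

Lemma CS u (e : R) : 0 < e -> exists d : R, 0 < d /\
  forall z, ip_norm ip z < d -> cabs (ip u z) < e.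
Proof.
move=> e0.
have [N Eu N0] := ip_real u.
have e20 : 0 < e ^+ 2 by rewrite exprn_gt0.
have K0 : 0 < N + 1 + e ^+ 2 by lra.
exists (e ^+ 2 / (N + 1 + e ^+ 2)); split; first by rewrite divr_gt0.
set d := e ^+ 2 / _.
have dK : d * (N + 1 + e ^+ 2) = e ^+ 2 by rewrite /d divfK // gt_eqF.
move=> z hz.
have [M Ez M0] := ip_real z.
set s := (N + 1) / e ^+ 2.
have sK : s * e ^+ 2 = N + 1 by rewrite /s divfK // gt_eqF.
have s0 : 0 < s by rewrite /s divr_gt0 //; lra.
case Ew: (ip u z) => [a c].
have P := ip_ge0 (u + (- ((s%:C) * (a +i* c))) *: z).
rewrite ip_expand Eu Ez Ew lecE /= in P.
move: P; simpc => /andP[_ P].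
move: hz; rewrite /ip_norm Ez /= => hz.
set q := Num.sqrt M in hz.
have q0 : 0 <= q by apply: sqrtr_ge0.
have Mq : M = q ^+ 2 by rewrite /q sqr_sqrtr.
rewrite /cabs /=.
have W0 : 0 <= a ^+ 2 + c ^+ 2 by nra.
rewrite -(@ger0_norm _ e) ?(ltW e0) // -sqrtr_sqr ltr_sqrt //.
have d1 : d < 1 by nra.
have Md : M < d by nra.
have sd : s * d < 1 by nra.
have sM : s * M < 1 by nra.
set W := a ^+ 2 + c ^+ 2 in W0 *.
have P' : 0 <= N - 2 * s * W + s ^+ 2 * W * M by rewrite /W; nra.
have h1 : 0 <= s * W * (1 - s * M) by apply: mulr_ge0; [apply: mulr_ge0; lra | lra].
have h2 : s * W <= N by nra.
nra.
Qed.

End Helpers.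

Theorem lemma4p2 (R : realType)
    (A0 : algType R[i]) (star : A0 -> A0) (n0 n : A0 -> R)
    (HA0 : is_Cstar_alg star n0) (Hn : is_CQ_norm star n0 n)
    (A : lmodType R[i]) (nA : A -> R) (j : A0 -> A)
    (HA : is_completion n nA j)
    (lmul : A0 -> A -> A) (Hlmul : is_lmul nA j lmul)
    (om : A0 -> R[i]) (Hom : in_E star n om)
    (ombar : A -> R[i]) (Hombar : is_ext nA j om ombar)
    (H : lmodType R[i]) (ip : H -> H -> R[i]) (HH : is_Hilbert ip)
    (lam : A0 -> H) (Hgns : is_GNS star om ip lam)
    (X : A) (alpha : R[i]) :
  (forall a : A0, ombar (lmul a X) = alpha * ombar (j a))
  <->
  (bounded_uv ip lam (pi_bar_I star lmul ombar X)
   /\ bracket_is ip lam (pi_bar_I star lmul ombar X) (alpha *: lam 1)).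
Proof.
have starK : forall x, star (star x) = x by case: HA0 => -[].
have Gip : forall x y, ip (lam x) (lam y) = om (star y * x) by case: Hgns.
have nA0 : nA 0 = 0.
  case: HA => -[_ _ hs _] _ _ _ _.
  by rewrite -(scale0r (0 : A)) hs cabs0 mul0r.
have ombar_j : forall a, ombar (j a) = om a.
  move=> a.
  have hc : cvg_in nA (fun _ => j a) (j a).
    by move=> e e0; exists 0%N => k _; rewrite subrr nA0.
  have := Hombar _ _ hc => /= hcv.
  set x := cabs (om a - ombar (j a)) in hcv.
  have x0 : 0 <= x by apply: cabs_ge0.
  have : x = 0.
    apply/eqP; rewrite eq_le x0 andbT leNgt; apply/negP => xp.
    have [N hN] := hcv x xp.
    by have := hN N (leqnn N); rewrite ltxx.
  move/ComplexField.Normc.eq0_normc/eqP; rewrite subr_eq0 => /eqP.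
  by [].
have Hbr1 : forall c, alpha * ip (lam 1) (lam c) = alpha * om (star c).
  by move=> c; rewrite Gip mulr1.
split.
- move=> Hi.
  have Hb : forall c, pi_bar_I star lmul ombar X c = alpha * ip (lam 1) (lam c).
    by move=> c; rewrite /pi_bar_I Hi ombar_j Hbr1.
  split.
  + exists (fun y => alpha * ip (lam 1) y); split; last by move=> c; rewrite Hb.
    move=> x e e0.
    have ca0 := @cabs_ge0 R alpha.
    have ep : 0 < e / (cabs alpha + 1) by rewrite divr_gt0 //; lra.
    have [d [d0 hd]] := @CS R H ip HH (lam 1) _ ep.
    exists d; split => // y hy.
    rewrite -mulrBr -(@ipB2 R H ip HH) cabsM.
    have := hd _ hy; rewrite ltr_pdivlMr; last by lra.
    have := @cabs_ge0 R (ip (lam 1) (y - x)).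
    move=> h1 h2; nra.
  + by move=> c; rewrite Hb (@ipZ1 R H ip HH).
- move=> [_ Hbr] a.
  have := Hbr (star a).
  by rewrite /pi_bar_I starK (@ipZ1 R H ip HH) Gip mulr1 starK ombar_j.
Qed.
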